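(* Let $K\in\mathbb{N}$, $\mathcal{X}=[0,1]^K$, and let $p,q$ be two probability density functions supported on $\mathcal{X}$ with finite differential entropies $h(p),h(q)$. Let $\varepsilon,A>0$ and assume that for all $\mathbf{x}\in\mathcal{X}$ we have $|p(\mathbf{x})-q(\mathbf{x})|\le\varepsilon$ and $0\le p(\mathbf{x})\le A$, and that $\frac{\varepsilon}{A}\le\alpha$, where $\alpha:=\frac{\sqrt{e^2+4}-e}{2e}$. Then \[ |h(p)-h(q)|\le\varepsilon\log\frac{A}{\varepsilon}. \]
   Context: $h(p)=-\int p\log p\,\mathrm{d}\lambda^K$ denotes differential entropy. *)

(* Defs.v *)
From HB Require Import structures.
From mathcomp Require Import all_boot all_order all_algebra.
From mathcomp Require Import all_classical all_reals all_analysis.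
Set Implicit Arguments. Unset Strict Implicit. Unset Printing Implicit Defensive.
Import Order.TTheory GRing.Theory Num.Theory.
Local Open Scope classical_set_scope.
Local Open Scope ring_scope.

(* Points of R^K are K-tuples of reals, with the product (coordinate)
   sigma-algebra of the Borel sigma-algebra of R provided by mathcomp-analysis. *)

Definition cube (R : realType) (K : nat) : set (K.-tuple R) :=
  [set x | forall i : 'I_K, 0 <= tnth x i <= 1].
Arguments cube R K : clear implicits.

(* mu is K-dimensional Lebesgue measure: it gives every closed box its volume.
   (Closed boxes form a generating pi-system of the product Borel sigma-algebra
   and R^K is sigma-finite for such a measure, so this characterizes mu.) *)
Definition is_lebesgueK (R : realType) (K : nat)
  (mu : {measure set (K.-tuple R) -> \bar R}) : Prop :=
  forall a b : 'I_K -> R, (forall i, a i <= b i) ->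
    mu [set x | forall i : 'I_K, a i <= tnth x i <= b i]
    = (\prod_(i < K) (b i - a i))%:E.

Definition density_on_cube (R : realType) (K : nat)
  (mu : {measure set (K.-tuple R) -> \bar R}) (p : K.-tuple R -> R) : Prop :=
  [/\ measurable_fun setT p,
      (forall x, 0 <= p x),
      (forall x, ~ cube R K x -> p x = 0) &
      (\int[mu]_x (p x)%:E = 1)%E].

(* the entropy integrand p log p (with ln 0 = 0, i.e. 0 log 0 = 0) *)
Definition plogp (R : realType) (K : nat) (p : K.-tuple R -> R) :=
  fun x => p x * ln (p x).

Definition finite_entropy (R : realType) (K : nat)
  (mu : {measure set (K.-tuple R) -> \bar R}) (p : K.-tuple R -> R) : Prop :=
  mu.-integrable setT (fun x => (plogp p x)%:E).

Definition diff_entropy (R : realType) (K : nat)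
  (mu : {measure set (K.-tuple R) -> \bar R}) (p : K.-tuple R -> R) : R :=
  - Rintegral mu setT (plogp p).

Definition alpha_const (R : realType) : R :=
  (Num.sqrt (expR 1 ^+ 2 + 4) - expR 1) / (2 * expR 1).
Arguments alpha_const R : clear implicits.

(* Main.v *)
Require Import Defs.
From HB Require Import structures.
From mathcomp Require Import all_boot all_order all_algebra.
From mathcomp Require Import all_classical all_reals all_analysis.
From mathcomp Require Import ring lra measurable_realfun.
Import Order.TTheory GRing.Theory Num.Theory.
Local Open Scope classical_set_scope.
Local Open Scope ring_scope.
Section pw.
Variable R : realType.
Implicit Types s t r : R.
Definition g (t : R) := t * ln t.

Lemma tangent s t : 0 <= s -> 0 < t -> s * ln t + s - t <= g s.
Proof.
rewrite /g le_eqVlt => /predU1P[<-|s0] t0; first by rewrite !mul0r add0r sub0r oppr_le0 ltW.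
have H1 : ln (t/s) <= t/s - 1.
  have := le_ln1Dx (x := t/s - 1); rewrite (addrC 1) subrK; apply.
  rewrite ltrBrDl; have : 0 < t/s by rewrite divr_gt0. lra.
rewrite ln_div ?posrE // in H1.
have H3 : s * (t/s - 1) = t - s by field; rewrite gt_eqF.
have H4 : s * (ln t - ln s) <= s * (t/s - 1) by rewrite ler_pM2l.
rewrite H3 in H4; lra.
Qed.

Lemma superadd s d : 0 <= s -> 0 <= d -> g s + g d <= g (s + d).
Proof.
move=> s0 d0; rewrite /g mulrDl.
have [->|sp] := eqVneq s 0; first by rewrite !mul0r !add0r.
have [->|dp] := eqVneq d 0; first by rewrite !mul0r !addr0.
have sp' : 0 < s by rewrite lt_def sp s0.
have dp' : 0 < d by rewrite lt_def dp d0.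
apply: lerD; apply: ler_wpM2l => //; rewrite ler_ln ?posrE ?addr_gt0 //; lra.
Qed.


Lemma r_le1 r : 0 < r -> r * (1 + r) * expR 1 ^+ 2 <= 1 -> r <= 1.
Proof.
move=> r0 H.
have e0 : 1 <= expR 1 :> R by rewrite -expR0 ler_expR.
have e1 : 1 <= expR 1 ^+ 2 :> R by rewrite expr2; nra.
nra.
Qed.

Lemma lnr_bound r : 0 < r -> r * (1 + r) * expR 1 ^+ 2 <= 1 -> 1 + r <= - ln r.
Proof.
move=> r0 H.
have r1 : r <= 1.
  have e0 : 1 <= expR 1 :> R by rewrite -expR0 ler_expR.
  have e1 : 1 <= expR 1 ^+ 2 :> R by rewrite expr2; nra.
  nra.
rewrite -lnV ?posrE // -ler_expR lnK ?posrE ?invr_gt0 //.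
have -> : expR (1 + r) = expR 1 ^+ 2 * expR (r - 1).
  rewrite -expRM_natl -expRD; congr expR; ring.
have : expR (r - 1) <= 1.
  by rewrite -[X in _ <= X]expR0 ler_expR; lra.
have : 0 < expR 1 ^+ 2 :> R by rewrite expr2 mulr_gt0 ?expR_gt0.
have : 0 < expR (r - 1) by rewrite expR_gt0.
move=> h1 h2 h3; rewrite -(ler_pM2l r0) mulfV ?gt_eqF //.
nra.
Qed.

Lemma ordered s t r : 0 < r -> r * (1 + r) * expR 1 ^+ 2 <= 1 ->
  0 <= s -> s <= t -> t - s <= r -> t <= 1 + r ->
  g r <= g t - g s <= - g r.
Proof.
move=> r0 Hr s0 st tsr t1.
have L := lnr_bound r r0 Hr.
have ts0 : 0 <= t - s by rewrite subr_ge0.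
apply/andP; split.
  have := superadd s (t-s) s0 ts0; rewrite (_ : s + (t - s) = t); last by ring.
  move=> H1.
  have := tangent (t-s) r ts0 r0.
  rewrite /g in H1 * => H2.
  nra.
have [t0|tp] := eqVneq t 0.
  have -> : s = 0 by apply/eqP; rewrite eq_le s0 -t0 st.
  rewrite t0 subrr oppr_ge0 /g pmulr_rle0 // ln_le0 //; exact: r_le1 r0 Hr.
have tp' : 0 < t by rewrite lt_def tp (le_trans s0 st).
have := tangent s t s0 tp'.
have lt : ln t <= t - 1.
  have := le_ln1Dx (x := t - 1); rewrite (addrC 1) subrK; apply; lra.
rewrite /g => H.
nra.
Qed.

Lemma scaled u v r : 0 < r -> r * (1 + r) * expR 1 ^+ 2 <= 1 ->
  0 <= u <= 1 -> 0 <= v -> `|u - v| <= r -> `|g v - g u| <= - g r.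
Proof.
move=> r0 Hr /andP[u0 u1] v0 uv.
rewrite ler_norml.
have [le|le] := leP u v.
  have h1 : v - u <= r by move: uv; rewrite distrC ger0_norm ?subr_ge0.
  have h3 : v <= 1 + r by lra.
  have /andP[a b] := @ordered u v r r0 Hr u0 le h1 h3.
  apply/andP; split; lra.
have h1 : u - v <= r by move: uv; rewrite ger0_norm // subr_ge0 ltW.
have h3 : u <= 1 + r by have := ltW r0; lra.
have /andP[a b] := @ordered v u r r0 Hr v0 (ltW le) h1 h3.
apply/andP; split; lra.
Qed.

Lemma gscale b A : 0 <= b -> 0 < A -> A * g (b / A) = g b - ln A * b.
Proof.
rewrite le_eqVlt => /predU1P[<-|b0] A0; first by rewrite /g !(mul0r, mulr0) subrr.
rewrite /g ln_div ?posrE // mulrA mulrCA divff ?gt_eqF // mulr1; ring.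
Qed.

Lemma alpha_bound r : 0 < r -> r <= alpha_const R ->
  r * (1 + r) * expR 1 ^+ 2 <= 1.
Proof.
move=> r0; rewrite /alpha_const.
set e := expR 1; set S := Num.sqrt _.
have e0 : 0 < e by rewrite expR_gt0.
have S2 : S ^+ 2 = e ^+ 2 + 4 by rewrite sqr_sqrtr // addr_ge0 // sqr_ge0.
have S0 : 0 <= S by rewrite sqrtr_ge0.
set a := (S - e) / (2 * e).
have ha : a * (1 + a) * e ^+ 2 = 1.
  have -> : a * (1 + a) * e ^+ 2 = (S ^+ 2 - e ^+ 2) / 4.
    rewrite /a; field; rewrite gt_eqF //.
  by rewrite S2 addrC addKr divff.
move=> ra.
have : r * (1 + r) <= a * (1 + a) by nra.
have : 0 < e ^+ 2 by rewrite expr2 mulr_gt0.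
nra.
Qed.

Lemma key a b eps A : 0 < eps -> 0 < A -> 0 <= a <= A -> 0 <= b ->
  `|a - b| <= eps -> eps / A <= alpha_const R ->
  `|g b - g a - ln A * (b - a)| <= eps * ln (A / eps).
Proof.
move=> e0 A0 /andP[a0 aA] b0 ab ea.
have r0 : 0 < eps / A by rewrite divr_gt0.
have Hr := alpha_bound (eps/A) r0 ea.
have u01 : 0 <= a / A <= 1.
  by rewrite divr_ge0 // ?(ltW A0) //= ler_pdivrMr // mul1r.
have v0 : 0 <= b / A by rewrite divr_ge0 // ltW.
have uv : `|a / A - b / A| <= eps / A.
  have Ai : `|A^-1| = A^-1 by rewrite gtr0_norm // invr_gt0.
  by rewrite -mulrBl normrM Ai ler_pM2r // invr_gt0.
have := scaled (a/A) (b/A) (eps/A) r0 Hr u01 v0 uv.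
have -> : g b - g a - ln A * (b - a) = A * (g (b / A) - g (a / A)).
  by rewrite [RHS]mulrBr (gscale b A b0 A0) (gscale a A a0 A0); ring.
move=> H.
rewrite normrM gtr0_norm //.
have -> : eps * ln (A / eps) = A * (- g (eps / A)).
  rewrite /g -invf_div lnV ?posrE //; field; rewrite gt_eqF //.
by rewrite ler_pM2l.
Qed.
End pw.
Lemma cube_measurable (R : realType) (K : nat) : measurable (cube R K).
Proof.
have -> : cube R K = \bigcap_(i in [set: 'I_K]) ((@tnth K R)^~ i @^-1` `[0, 1]%classic).
  apply/seteqP; split => x /=.
    by move=> H i _ /=; rewrite in_itv /= H.
  by move=> H i; have := H i I; rewrite /= in_itv.
apply: fin_bigcap_measurable; first exact: finite_finset.
move=> i _; rewrite -[X in measurable X]setTI.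
by apply: measurable_tnth => //.
Qed.

Lemma mu_cube (R : realType) (K : nat) (mu : {measure set (K.-tuple R) -> \bar R}) :
  is_lebesgueK mu -> mu (cube R K) = 1%E.
Proof.
move=> H; have := H (fun _ => 0) (fun _ => 1) (fun _ => ler01).
rewrite /cube => ->; rewrite big1 // => i _; by rewrite subr0.
Qed.

Section main.
Variables (R : realType) (K : nat) (mu : {measure set (K.-tuple R) -> \bar R}).
Local Notation T := (K.-tuple R).

Lemma iB (f h : T -> R) : mu.-integrable setT (EFin \o f) ->
  mu.-integrable setT (EFin \o h) ->
  mu.-integrable setT (EFin \o (fun x => f x - h x)).
Proof.
move=> If Ih; apply: (eq_integrable measurableT _ _ _ (integrableB measurableT If Ih)) => x _ /=.
by rewrite EFinB.
Qed.

Lemma iZ (f : T -> R) k : mu.-integrable setT (EFin \o f) ->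
  mu.-integrable setT (EFin \o (fun x => k * f x)).
Proof.
move=> If; apply: (eq_integrable measurableT _ _ _ (integrableZl measurableT k If)) => x _ /=.
by rewrite EFinM.
Qed.

Lemma dens_int p : density_on_cube mu p -> mu.-integrable setT (EFin \o p).
Proof.
case=> mp p0 _ i1; apply/integrableP; split; first exact/measurable_EFinP.
under eq_integral do rewrite gee0_abs ?lee_fin //.
by rewrite i1 ltry.
Qed.

Lemma dens_R1 p : density_on_cube mu p -> Rintegral mu setT p = 1.
Proof. by case=> _ _ _ i1; rewrite /Rintegral i1. Qed.
End main.
Arguments iB {R K mu f h}.
Arguments iZ {R K mu f} k.
Arguments dens_int {R K mu p}.
Arguments dens_R1 {R K mu p}.

Theorem lemma6 (R : realType) (K : nat)
  (mu : {measure set (K.-tuple R) -> \bar R})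
  (p q : K.-tuple R -> R) (eps A : R) :
  is_lebesgueK mu ->
  density_on_cube mu p -> density_on_cube mu q ->
  finite_entropy mu p -> finite_entropy mu q ->
  0 < eps -> 0 < A ->
  (forall x, cube R K x -> `|p x - q x| <= eps) ->
  (forall x, cube R K x -> 0 <= p x <= A) ->
  eps / A <= alpha_const R ->
  `|diff_entropy mu p - diff_entropy mu q| <= eps * ln (A / eps).
Proof.
move=> Hleb Dp Dq Ep Eq e0 A0 Hpq HpA Hal.
have Ip := dens_int Dp; have Iq := dens_int Dq.
set F := fun x => plogp q x - plogp p x - ln A * (q x - p x).
have IF : mu.-integrable setT (EFin \o F) := iB (iB Eq Ep) (iZ (ln A) (iB Iq Ip)).
have E : Rintegral mu setT F = diff_entropy mu p - diff_entropy mu q.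
  rewrite /F RintegralB //; last exact: iZ (iB Iq Ip); last exact: iB Eq Ep.
  rewrite RintegralB // RintegralZl //; last exact: iB Iq Ip.
  rewrite RintegralB // (dens_R1 Dp) (dens_R1 Dq) /diff_entropy.
  rewrite subrr mulr0 subr0; ring.
rewrite -E; apply: le_trans (le_normr_Rintegral measurableT IF) _.
set B := eps * ln (A / eps).
have HI : (\int[mu]_x (`|F x|)%:E <= B%:E)%E.
  have -> : (fun x => (`|F x|)%:E) = ((fun x => (`|F x|)%:E) \_ (cube R K)).
    apply/funext => x; rewrite /patch; case: ifPn => // xn.
    have nx : ~ cube R K x by move=> c; apply: (negP xn); exact: mem_set.
    case: Dp => _ _ p0 _; case: Dq => _ _ q0 _.
    by rewrite /F /plogp (p0 x nx) (q0 x nx) !(mul0r, mulr0, subr0) normr0.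
  rewrite -integral_mkcond.
  apply: (@le_trans _ _ (\int[mu]_(x in cube R K) (cst B%:E) x)%E).
    apply: ge0_le_integral => //.
    - exact: cube_measurable.
    - apply: measurable_funS (measurable_int mu (integrable_norm IF)) => //.
    - move=> x cx; rewrite lee_fin.
      case: Dq => _ q0 _ _.
      exact: (@key R (p x) (q x) eps A e0 A0 (HpA x cx) (q0 x) (Hpq x cx) Hal).
  rewrite integral_cst; last exact: cube_measurable.
  have -> : mu (cube R K) = 1%E by exact: (mu_cube _ _ _ Hleb).
  by rewrite mule1.
move: HI; rewrite /Rintegral.
have : (0 <= \int[mu]_x (`|F x|)%:E)%E by apply: integral_ge0 => x _; rewrite lee_fin.
by case: (\int[mu]_x (`|F x|)%:E)%E => [r| |] //=; rewrite lee_fin.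
Qed.
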